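(* Let $C\in\mathbb{R}^{m\times n}$ with $\operatorname{rank}(C)=c$ and $M\in\mathcal{M}_{m\times n}(\mathbb{R})$ with $\operatorname{rank}(M)=k$, and suppose $C=M+\sum_{i=1}^{c-k}\mathbf{r}_i\mathbf{c}_i^\mathsf{T}$ for some $\mathbf{r}_i\in\mathbb{R}^m$, $\mathbf{c}_i\in\mathbb{R}^n$. Then: (1) If $k=2$, then $\mathbf{1}_m\in\operatorname{span}(C)$ and $\mathbf{1}_n\in\operatorname{span}(C^\mathsf{T})$; moreover every $\mathbf{x}\in\mathbb{R}^n$ with $C\mathbf{x}=\mathbf{1}_m$ satisfies $\mathbf{1}_n^\mathsf{T}\mathbf{x}=0$, and every $\mathbf{y}\in\mathbb{R}^m$ with $C^\mathsf{T}\mathbf{y}=\mathbf{1}_n$ satisfies $\mathbf{1}_m^\mathsf{T}\mathbf{y}=0$. (2) If $k=1$, then $\mathbf{1}_m\in\operatorname{span}(C)$ or $\mathbf{1}_n\in\operatorname{span}(C^\mathsf{T})$ (or both).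
   Context: $\mathbf{1}_k$ is the all-ones vector of length $k$. $\operatorname{span}(C)$ denotes the column space of $C$. $\mathcal{M}_{m\times n}(\mathbb{R})=\{M\in\mathbb{R}^{m\times n}: M=\mathbf{1}_m\mathbf{u}^\mathsf{T}+\mathbf{v}\mathbf{1}_n^\mathsf{T}\text{ for some }\mathbf{u}\in\mathbb{R}^n,\mathbf{v}\in\mathbb{R}^m\}$. *)

(* Defs.v *)
From HB Require Import structures.
From mathcomp Require Import all_boot all_order all_algebra.
Set Implicit Arguments. Unset Strict Implicit. Unset Printing Implicit Defensive.
Import Order.TTheory GRing.Theory Num.Theory.
Local Open Scope ring_scope.

Definition in_Mclass (R : nzRingType) (m n : nat) (A : 'M[R]_(m, n)) : Prop :=
  exists (u : 'rV[R]_n) (v : 'cV[R]_m),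
    A = (const_mx 1 : 'cV[R]_m) *m u + v *m (const_mx 1 : 'rV[R]_n).

(* Main.v *)
Require Import Defs.
From HB Require Import structures.
From mathcomp Require Import all_boot all_order all_algebra.
From mathcomp Require Import zify.
Import Order.TTheory GRing.Theory Num.Theory.
Local Open Scope ring_scope.
Set Implicit Arguments. Unset Strict Implicit.

Lemma direct_sum (F : fieldType) m n (A B : 'M[F]_(m, n)) :
  \rank (A + B)%R = (\rank A + \rank B)%N ->
  (A <= (A + B)%R)%MS /\ (A :&: B <= (0 : 'M_n))%MS.
Proof.
move=> rH.
have h1 : ((A + B)%R <= (A + B)%MS)%MS
  := addmx_sub_adds (submx_refl A) (submx_refl B).
have h3 := mxrank_adds_leqif A B.
have e : \rank (A + B)%MS = (\rank A + \rank B)%N.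
  apply/eqP; rewrite eqn_leq h3 -rH.
  by have := mxrank_leqif_sup h1 => -[->].
have h2 := mxrank_leqif_sup h1.
have s : ((A + B)%MS <= (A + B)%R)%MS by rewrite -h2.2 rH e.
split; first by apply: submx_trans s; apply: addsmxSl.
by rewrite -h3.2 e.
Qed.

Lemma subB_sub (F : fieldType) m1 m2 n (X Y : 'M[F]_(m1, n)) (B : 'M[F]_(m2, n)) :
  (X <= B)%MS -> (Y <= B)%MS -> ((X - Y)%R <= B)%MS.
Proof.
move=> hX hY; apply: addmx_sub hX _.
by rewrite -scaleN1r scalemx_sub.
Qed.

Lemma Mclass_tr (R : fieldType) m n (M : 'M[R]_(m, n)) :
  in_Mclass M -> in_Mclass M^T.
Proof.
move=> [u [v ->]]; exists v^T, u^T.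
by rewrite linearD /= !trmx_mul !trmx_const addrC.
Qed.

Lemma row_one_sub (R : fieldType) m n (M : 'M[R]_(m, n)) u v :
  M = (const_mx 1 : 'cV[R]_m) *m u + v *m (const_mx 1 : 'rV[R]_n) ->
  (\rank (col_mx u (const_mx 1%R : 'rV[R]_n)) <= \rank M)%N ->
  ((const_mx 1 : 'rV[R]_n) <= M)%MS /\
  (M == col_mx u (const_mx 1 : 'rV[R]_n))%MS.
Proof.
move=> eM hr.
set B := col_mx u (const_mx 1 : 'rV[R]_n).
have eM' : M = row_mx (const_mx 1) v *m B by rewrite mul_row_col.
have sMB : (M <= B)%MS by rewrite eM' submxMl.
have sBM : (B <= M)%MS.
  have h := mxrank_leqif_sup sMB.
  rewrite -h.2; apply/eqP/anti_leq; rewrite hr andbT; exact: h.1.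
split; last by apply/andP.
apply: submx_trans sBM; rewrite /B -addsmxE; exact: addsmxSr.
Qed.

Lemma half2 (R : fieldType) m n (C M S : 'M[R]_(m, n)) :
  C = M + S -> \rank C = (\rank M + \rank S)%N -> in_Mclass M -> \rank M = 2%N ->
  ((const_mx 1 : 'rV[R]_n) <= C)%MS /\
  (forall y : 'cV[R]_m, C^T *m y = const_mx 1 -> (const_mx 1 : 'rV[R]_m) *m y = 0).
Proof.
move=> eC rC [u [v eM]] rM.
have [sMC dir] : (M <= (M + S)%R)%MS /\ (M :&: S <= (0 : 'M_n))%MS.
  by apply: direct_sum; rewrite -eC.
rewrite -eC in sMC.
set B := col_mx u (const_mx 1 : 'rV[R]_n).
have rB : (\rank B <= 2)%N by apply: (rank_leq_row B).
have [s1 eMB] := @row_one_sub _ _ _ M u v eM (leq_trans rB (eq_leq (esym rM))).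
split; first exact: submx_trans sMC.
move=> y hy.
set w := y^T.
have ew : w *m C = const_mx 1.
  by apply: trmx_inj; rewrite trmx_mul trmxK trmx_const.
have wS0 : w *m S = 0.
  apply/eqP; rewrite -submx0; apply: submx_trans dir.
  rewrite sub_capmx submxMl andbT.
  have -> : w *m S = w *m C - w *m M by rewrite eC mulmxDr addrC addKr.
  apply: subB_sub; last exact: submxMl.
  by rewrite ew.
have wM : w *m M = const_mx 1 by rewrite -ew eC mulmxDr wS0 addr0.
have rfB : row_free B by rewrite /row_free -(eqmxP eMB) rM.
have e1 : row_mx (w *m const_mx 1) (w *m v) *m B = row_mx 0 1 *m B.
  rewrite -mul_mx_row -mulmxA [row_mx _ v *m B]mul_row_col -eM wM.
  by rewrite mul_row_col mul0mx mul1mx add0r.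
have [h0 _] := eq_row_mx (row_free_inj rfB e1).
apply: trmx_inj; by rewrite trmx_mul trmx_const trmx0 -/w h0.
Qed.

Lemma half1 (R : fieldType) m n (M : 'M[R]_(m, n)) :
  in_Mclass M -> \rank M = 1%N ->
  ((const_mx 1 : 'rV[R]_n) <= M)%MS \/ ((const_mx 1 : 'rV[R]_m) <= M^T)%MS.
Proof.
move=> [u [v eM]] rM.
case: (leqP (\rank (col_mx u (const_mx 1%R : 'rV[R]_n))) 1) => h.
  by left; apply: (@row_one_sub _ _ _ M u v eM _).1; rewrite rM.
right.
have eMt : M^T = (const_mx 1 : 'cV[R]_n) *m v^T + u^T *m (const_mx 1 : 'rV[R]_m).
  by rewrite eM linearD /= !trmx_mul !trmx_const addrC.
apply: (@row_one_sub _ _ _ M^T v^T u^T eMt _).1.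
rewrite mxrank_tr rM leqNgt; apply/negP => h2.
have rfB : row_free (col_mx u (const_mx 1%R : 'rV[R]_n)).
  rewrite /row_free eqn_leq h rank_leq_row //.
have : \rank M = \rank (row_mx (const_mx 1 : 'cV[R]_m) v).
  by rewrite eM -mul_row_col mxrankMfree.
rewrite rM -mxrank_tr tr_row_mx trmx_const -addsmxE addsmxC addsmxE => e.
by move: h2; rewrite -e.
Qed.

Lemma rank_sum_le (R : fieldType) m n p (F : 'I_p -> 'M[R]_(m, n)) :
  (forall i, (\rank (F i) <= 1)%N) -> (\rank (\sum_(i < p) F i)%R <= p)%N.
Proof.
elim: p F => [|p IH] F hF; first by rewrite big_ord0 mxrank0.
rewrite big_ord_recr /=; apply: leq_trans (mxrank_add _ _) _.
apply: (@leq_trans (p + 1)); last by rewrite addn1.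
by rewrite leq_add // IH.
Qed.

Theorem mainTheorem11 (R : realFieldType) (m n c k : nat)
  (C M : 'M[R]_(m, n))
  (hC : \rank C = c) (hMcl : in_Mclass M) (hM : \rank M = k)
  (r : 'I_(c - k) -> 'cV[R]_m) (cc : 'I_(c - k) -> 'cV[R]_n)
  (hdec : C = M + \sum_(i < c - k) r i *m (cc i)^T) :
  (k = 2%N ->
     ((const_mx 1 : 'rV[R]_m) <= C^T)%MS /\
     ((const_mx 1 : 'rV[R]_n) <= C)%MS /\
     (forall x : 'cV[R]_n, C *m x = const_mx 1 ->
        (const_mx 1 : 'rV[R]_n) *m x = 0) /\
     (forall y : 'cV[R]_m, C^T *m y = const_mx 1 ->
        (const_mx 1 : 'rV[R]_m) *m y = 0)) /\
  (k = 1%N ->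
     ((const_mx 1 : 'rV[R]_m) <= C^T)%MS \/
     ((const_mx 1 : 'rV[R]_n) <= C)%MS).
Proof.
set S := \sum_(i < c - k) r i *m (cc i)^T in hdec.
have rS : (\rank S <= c - k)%N.
  apply: rank_sum_le => i; apply: leq_trans (mxrankM_maxl _ _) _.
  exact: rank_leq_col.
have r1 : (c <= k + \rank S)%N by rewrite -hC -hM hdec mxrank_add.
have r2 : (k <= c + \rank S)%N.
  rewrite -hC -hM -(mxrank_opp S); have -> : M = C + - S by rewrite hdec addrK.
  exact: mxrank_add.
have rC : \rank C = (\rank M + \rank S)%N by rewrite hC hM; lia.
have eCt : C^T = M^T + S^T by rewrite hdec linearD.
have rCt : \rank C^T = (\rank M^T + \rank S^T)%N by rewrite !mxrank_tr.
have hMt := Mclass_tr hMcl.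
split => hk.
  have rM2 : \rank M = 2%N by rewrite hM.
  have rMt2 : \rank M^T = 2%N by rewrite mxrank_tr.
  have [a1 a2] := half2 hdec rC hMcl rM2.
  have [b1 b2] := half2 eCt rCt hMt rMt2.
  split; first exact: b1.
  split; first exact: a1.
  split; last exact: a2.
  by move=> x hx; apply: b2; rewrite trmxK.
have rM1 : \rank M = 1%N by rewrite hM.
have := @direct_sum _ _ _ M S; rewrite -hdec => /(_ rC) [sMC _].
have := @direct_sum _ _ _ M^T S^T; rewrite -eCt => /(_ rCt) [sMCt _].
case: (half1 hMcl rM1) => h; [right; exact: submx_trans sMC | left; exact: submx_trans sMCt].
Qed.
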